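(* For every quantifier-free insertion query $\rho$ over the graph schema $\{E\}$ there is a constant $m\in\mathbb N$ such that for every directed acyclic graph $G$ and every change $\delta=\rho(\bar a)$, either $\delta(G)$ has a (directed) cycle containing at most $m$ bridges, or for all nodes $u,v$ of $G$ such that there is a directed path from $u$ to $v$ in $\delta(G)$ it holds that $\mathrm{bd}(u,v)\le m$.
   Context: A quantifier-free insertion query $\rho(\bar p)$ for graphs is a rule $E := E(x,y)\lor\varphi(\bar p;x,y)$ with $\varphi$ a quantifier-free formula over $\{E\}$; the change $\delta=\rho(\bar a)$ maps a directed graph $G$ to the graph $\delta(G)$ with edge set $\{(b,c): G\models E(b,c)\lor\varphi(\bar a;b,c)\}$. A bridge is an edge of $\delta(G)$ that is not an edge of $G$. For nodes $u,v$ with a directed path from $u$ to $v$ in $\delta(G)$, the bridge distance $\mathrm{bd}(u,v)$ is the minimal number $d$ such that there is a directed path from $u$ to $v$ in $\delta(G)$ using exactly $d$ bridges. *)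

(* Defs.v *)
From mathcomp Require Import all_boot.
Set Implicit Arguments. Unset Strict Implicit. Unset Printing Implicit Defensive.

Inductive qvar (k : nat) : Type :=
  | VPar of 'I_k
  | VX
  | VY.

Inductive qf (k : nat) : Type :=
  | QTrue
  | QFalse
  | QEdge of qvar k & qvar k
  | QEq of qvar k & qvar k
  | QNot of qf k
  | QAnd of qf k & qf k
  | QOr of qf k & qf k.

Definition qassign (V : Type) k (a : 'I_k -> V) (b c : V) (t : qvar k) : V :=
  match t with VPar i => a i | VX => b | VY => c end.

Fixpoint qeval (V : eqType) (E : rel V) k (a : 'I_k -> V) (b c : V)
    (f : qf k) : bool :=
  match f with
  | QTrue => true
  | QFalse => false
  | QEdge s t => E (qassign a b c s) (qassign a b c t)
  | QEq s t => qassign a b c s == qassign a b c t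
  | QNot g => ~~ qeval E a b c g
  | QAnd g h => qeval E a b c g && qeval E a b c h
  | QOr g h => qeval E a b c g || qeval E a b c h
  end.

(* Edge relation of delta(G) for delta = rho(a), rho = (E := E(x,y) \/ phi). *)
Definition changed_edges (V : eqType) (E : rel V) k (phi : qf k) (a : 'I_k -> V)
  : rel V := fun b c => E b c || qeval E a b c phi.

(* Number of bridges (edges not in G) along the walk u :: p. *)
Definition nbridges (V : eqType) (E : rel V) (u : V) (p : seq V) : nat :=
  count (fun e : V * V => ~~ E e.1 e.2) (zip (u :: p) p).

Definition acyclic (V : eqType) (E : rel V) : Prop :=
  ~ exists (v : V) (p : seq V), [/\ p != [::], path E v p & last v p = v].

Definition is_cycle (V : eqType) (e : rel V) (v : V) (p : seq V) : Prop :=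
  [/\ p != [::], path e v p, last v p = v & uniq p].

Definition is_walk (V : eqType) (e : rel V) (u v : V) (p : seq V) : Prop :=
  path e u p /\ last u p = v.

Definition reachable (V : eqType) (e : rel V) (u v : V) : Prop :=
  exists p, is_walk e u v p.

(* bd(u,v) <= m, unfolded: the least d such that some walk from u to v in
   delta(G) uses exactly d bridges is at most m, i.e. some d <= m is attained. *)
Definition bd_le (V : eqType) (E e : rel V) (u v : V) (m : nat) : Prop :=
  exists d, d <= m /\ exists p, is_walk e u v p /\ nbridges E u p = d.

(* Main.v *)
Require Import Defs.
From mathcomp Require Import all_boot.
From Stdlib Require Import Classical.
From mathcomp Require Import zify.

Set Implicit Arguments. Unset Strict Implicit. Unset Printing Implicit Defensive.

Lemma nbridges_cons (V : eqType) (E : rel V) u c p :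
  nbridges E u (c :: p) = ~~ E u c + nbridges E c p.
Proof. by []. Qed.

Lemma nbridges_cat (V : eqType) (E : rel V) u s t :
  nbridges E u (s ++ t) = nbridges E u s + nbridges E (last u s) t.
Proof.
elim: s u => [|x s IH] u /=; first by [].
by rewrite !nbridges_cons IH addnA.
Qed.

Lemma notuniq_split (T : eqType) (s : seq T) :
  ~~ uniq s -> exists s1 x s2 s3, s = s1 ++ x :: s2 ++ x :: s3.
Proof.
elim: s => [|y s IH] //=.
case: (boolP (y \in s)) => [ys _ | ys /= us].
  case/splitPr: ys => s2 s3. by exists [::], y, s2, s3.
have [s1 [x [s2 [s3 ->]]]] := IH us.
by exists (y :: s1), x, s2, s3.
Qed.

Lemma cycle_of_closed (V : eqType) (E e : rel V) n v p :
  size p < n -> p != [::] -> path e v p -> last v p = v ->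
  exists v' p', is_cycle e v' p' /\ nbridges E v' p' <= nbridges E v p.
Proof.
elim: n v p => [|n IH] v p //= sz pn pp lp.
case: (boolP (uniq p)) => up.
  by exists v, p; split.
have [s1 [x [s2 [s3 eq_p]]]] := notuniq_split up.
move: (pp); rewrite eq_p cat_path /= => /andP [_ /andP [_]].
rewrite cat_path /= => /andP [px2 /andP [ex _]].
have := IH x (rcons s2 x).
case.
- move: sz; rewrite eq_p size_cat /= size_cat /= size_rcons. lia.
- by case: s2 {px2 ex eq_p}.
- by rewrite rcons_path px2.
- by rewrite last_rcons.
move=> v' [p' [cp hb]]; exists v', p'; split => //.
apply: (leq_trans hb).
rewrite nbridges_cat nbridges_cons nbridges_cat nbridges_cons.
rewrite -cats1 nbridges_cat nbridges_cons /nbridges /=. lia.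
Qed.

Lemma zip_split (V : eqType) (c : V) p x :
  x \in zip (c :: p) p -> exists q1 c' q2, p = q1 ++ c' :: q2 /\ x = (last c q1, c').
Proof.
elim: p c => [|d r IH] c //=.
rewrite in_cons => /orP [/eqP -> | /IH [q1 [c' [q2 [-> ->]]]]].
  by exists [::], d, r.
by exists (d :: q1), c', q2.
Qed.

Definition ncls k := ({ffun 'I_k -> bool * bool * bool} * bool)%type.

Section Main.
Variables (k : nat) (phi : qf k) (V : finType) (E : rel V) (a : 'I_k -> V).
Local Notation e := (changed_edges E phi a).

Definition cls (b : V) : ncls k :=
  ([ffun i => (b == a i, E b (a i), E (a i) b)], E b b).

Lemma cls_inv b b' : cls b = cls b' ->
  (forall i, [/\ (b == a i) = (b' == a i), E b (a i) = E b' (a i) &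
                 E (a i) b = E (a i) b']) /\ E b b = E b' b'.
Proof.
move=> h; split; last by have := congr1 snd h.
move=> i; have := congr1 (fun z : ncls k => z.1 i) h; rewrite /= !ffunE.
by case=> -> -> ->.
Qed.

Lemma qeval_cls b c b' c' (f : qf k) :
  cls b = cls b' -> cls c = cls c' -> E b c = E b' c' -> E c b = E c' b' ->
  (b == c) = (b' == c') -> qeval E a b c f = qeval E a b' c' f.
Proof.
move=> /cls_inv [hb hbb] /cls_inv [hc hcc] hbc hcb heq.
elim: f => //=.
- move=> s t; case: s => [i||]; case: t => [j||] //=;
  try (have [? ? ?] := hb i); try (have [? ? ?] := hc i);
  try (have [? ? ?] := hb j); try (have [? ? ?] := hc j); by [].
- move=> s t; case: s => [i||]; case: t => [j||] //=;
  try (have [? ? ?] := hb i); try (have [? ? ?] := hc i);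
  try (have [? ? ?] := hb j); try (have [? ? ?] := hc j);
  rewrite ?eqxx //; try (by rewrite eq_sym [in RHS]eq_sym); by [].
- by move=> g ->.
- by move=> g -> h ->.
- by move=> g -> h ->.
Qed.

Definition T := #|{: ncls k * ncls k}|.
Definition mm := T.+1.

Definition bridges u p := filter (fun x : V * V => ~~ E x.1 x.2) (zip (u :: p) p).
Definition bcls u p := map (fun x : V * V => (cls x.1, cls x.2)) (bridges u p).

Lemma size_bcls u p : size (bcls u p) = nbridges E u p.
Proof. by rewrite size_map size_filter. Qed.

Hypothesis noshort : forall v p, p != [::] -> path e v p -> last v p = v ->
  mm < nbridges E v p.

Lemma step p u : path e u p -> uniq (bcls u p) \/
  exists p', [/\ path e u p', last u p' = last u p & nbridges E u p' < nbridges E u p].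
Proof.
elim: p u => [|c p' IH] u; first by left.
move=> /= /andP [euc pp'].
case: (IH c pp') => [Hu | [p'' [h1 h2 h3]]]; last first.
  right; exists (c :: p''); split => //=; first by rewrite euc.
  by rewrite !nbridges_cons ltn_add2l.
case Euc: (E u c).
  by left; rewrite /bcls /bridges /= Euc.
case: (boolP ((cls u, cls c) \in bcls c p')) => Kin; last first.
  by left; rewrite /bcls /bridges /= Euc /= -/(bridges c p') -/(bcls c p') Kin.
case/mapP: Kin => x; rewrite mem_filter => /andP [nEx /zip_split [q1 [c' [q2 [eqp ex]]]]].
subst x p' => eqK.
have cu : cls u = cls (last c q1) by exact: (congr1 fst eqK).
have cc : cls c = cls c' by exact: (congr1 snd eqK).
clear eqK.
move: pp'; rewrite cat_path /= => /andP [pq1 /andP [eb' pq2]].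
move: nEx => /= nEb'.
set b' := last c q1 in cu eb' pq2 nEb'.
have nbtot : nbridges E u (c :: q1 ++ c' :: q2) =
   (1 + nbridges E c q1 + 1 + nbridges E c' q2)%N.
  rewrite nbridges_cons nbridges_cat nbridges_cons Euc -/b' (negbTE nEb') /=. lia.
have lastq : last u (c :: q1 ++ c' :: q2) = last c' q2 by rewrite /= last_cat.
have bcl : nbridges E c (q1 ++ c' :: q2) <= T.
  rewrite -size_bcls -(card_uniqP Hu); exact: max_card.
case: (eqVneq u c') => [uc' | uc'].
  right; exists q2; split => //; first by rewrite uc'.
  - by rewrite last_cat /= uc'.
  - by rewrite nbtot uc'; lia.
case Euc': (E u c').
  right; exists (c' :: q2); split => //=; first by rewrite /changed_edges Euc' pq2.
  - by rewrite nbtot nbridges_cons Euc' /=; lia.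
case Ec'u: (E c' u).
  exfalso.
  have pth : path e u (c :: q1 ++ [:: c'; u]).
    rewrite /= euc cat_path pq1 /= -/b' eb' /changed_edges Ec'u. by [].
  have := noshort (v := u) (p := c :: q1 ++ [:: c'; u]) isT pth.
  rewrite /= last_cat /= => /(_ erefl).
  rewrite nbridges_cons nbridges_cat -/b' /nbridges /= Euc Ec'u (negbTE nEb') /=.
  move: bcl; rewrite nbridges_cat -/b' nbridges_cons (negbTE nEb') /mm /=. rewrite -/(nbridges E c q1).
  move: (nbridges E c q1) (nbridges E c' q2) (T) => A B t. clear -A B t. lia.
have Ec'b' : E c' b' = false.
  apply/negP => Ecb; exfalso.
  have pth : path e b' [:: c'; b'] by rewrite /= eb' /changed_edges Ecb.
  have := noshort (v := b') (p := [:: c'; b']) isT pth erefl.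
  rewrite /nbridges /= (negbTE nEb') Ecb /mm /=. move: (T) => t. clear -t. lia.
have b'c' : (b' == c') = false.
  apply/negP => /eqP bc; exfalso.
  have pth : path e b' [:: b'] by rewrite /= {2}bc eb'.
  have := noshort (v := b') (p := [:: b']) isT pth erefl.
  rewrite /nbridges /= {2}bc (negbTE nEb') /mm /=. move: (T) => t. clear -t. lia.
have eb'q : qeval E a b' c' phi.
  by move: eb'; rewrite /changed_edges (negbTE nEb').
have euc' : e u c'.
  rewrite /changed_edges (@qeval_cls u c' b' c' phi cu erefl) ?eb'q ?orbT //.
  - by rewrite Euc' (negbTE nEb').
  - by rewrite Ec'u Ec'b'.
  - by rewrite b'c' (negbTE uc').
right; exists (c' :: q2); split => //=; first by rewrite euc' pq2.
- rewrite nbtot nbridges_cons. move: (leq_b1 (~~ E u c')). move: (nat_of_bool (~~ E u c')) (nbridges E c q1) (nbridges E c' q2) => x A B hx. clear -x A B hx. lia.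
Qed.

Lemma bound n p u : nbridges E u p < n -> path e u p ->
  exists p', [/\ path e u p', last u p' = last u p & nbridges E u p' <= T].
Proof.
elim: n p => [|n IH] p // hn pp.
case: (step pp) => [Hu | [p'' [h1 h2 h3]]].
  exists p; split => //; rewrite -size_bcls -(card_uniqP Hu); exact: max_card.
have [p3 [? ? ?]] := IH p'' (leq_trans h3 hn) h1.
by exists p3; split => //; congruence.
Qed.

End Main.

Theorem lemma4p4 :
  forall (k : nat) (phi : qf k), exists m : nat,
    forall (V : finType) (E : rel V), acyclic E ->
    forall a : 'I_k -> V,
      (exists (v : V) (p : seq V),
          is_cycle (changed_edges E phi a) v p /\ nbridges E v p <= m)
      \/
      (forall u v : V, reachable (changed_edges E phi a) u v ->
          bd_le E (changed_edges E phi a) u v m).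
Proof.
move=> k phi; exists (mm k) => V E _ a.
case: (classic (exists v p, [/\ p != [::], path (changed_edges E phi a) v p,
   last v p = v & nbridges E v p <= mm k])).
  move=> [v [p [pn pp lp hb]]]; left.
  have [v' [p' [c hb']]] := cycle_of_closed E (n := (size p).+1) (leqnn _) pn pp lp.
  by exists v', p'; split => //; apply: leq_trans hb' hb.
move=> H; right => u v [p [pp lp]].
have ns : forall v p, p != [::] -> path (changed_edges E phi a) v p -> last v p = v ->
    mm k < nbridges E v p.
  move=> v0 p0 h1 h2 h3; rewrite ltnNge; apply/negP => h4; apply: H.
  by exists v0, p0; split.
have [p' [h1 h2 h3]] := bound ns (n := (nbridges E u p).+1) (leqnn _) pp.
exists (nbridges E u p'); split; first by apply: leq_trans h3 _; rewrite /mm.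
by exists p'; split => //; split => //; rewrite h2.
Qed.
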